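(* The constant stationary solution $\overline U\equiv\kappa$ is linearly stable if $\kappa<1+4\pi^2D$ and linearly unstable if $\kappa>1+4\pi^2D$.
   Context: $\mathbb{T}=[0,1]$ with endpoints identified; $D>0,\kappa>0$. Evolution problem: $\partial_tu=Du_{xx}-u+\kappa e^u/\int_0^1e^{u}dy$ with periodic boundary conditions; $\overline U\equiv\kappa$ is its unique constant stationary solution. The linearization at $\overline U$ is the operator $\varphi\mapsto D\varphi_{xx}+(\kappa-1)\varphi-\kappa\int_0^1\varphi\,dy$ on $L^2(\mathbb{T})$ with domain $W^{2,2}(\mathbb{T})$. Linearly stable means all its eigenvalues are negative; linearly unstable means it has a positive eigenvalue. *)

(* Defs.v *)
From Stdlib Require Import Reals.
From Coquelicot Require Import Coquelicot.
Open Scope R_scope.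

(* Functions on the torus T = [0,1] with endpoints identified,
   represented as 1-periodic functions R -> R. *)
Definition periodic1 (f : R -> R) : Prop := forall x, f (x + 1) = f x.

Definition in_domain (phi : R -> R) : Prop :=
  periodic1 phi /\
  (forall x, ex_derive phi x) /\
  (forall x, ex_derive (Derive phi) x) /\
  (forall x, continuous (Derive_n phi 2) x).

(* Linearization at Ubar = kappa:
   phi |-> D phi'' + (kappa - 1) phi - kappa * int_0^1 phi. *)
Definition Lop (D kappa : R) (phi : R -> R) (x : R) : R :=
  D * Derive_n phi 2 x + (kappa - 1) * phi x - kappa * RInt phi 0 1.

Definition is_eigenvalue (D kappa lambda : R) : Prop :=
  exists phi : R -> R,
    in_domain phi /\ (exists x, phi x <> 0) /\
    (forall x, Lop D kappa phi x = lambda * phi x).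

Definition linearly_stable (D kappa : R) : Prop :=
  forall lambda, is_eigenvalue D kappa lambda -> lambda < 0.

Definition linearly_unstable (D kappa : R) : Prop :=
  exists lambda, is_eigenvalue D kappa lambda /\ 0 < lambda.

(* Main.v *)
Require Import Defs.
From Stdlib Require Import Reals Lra.
From Coquelicot Require Import Coquelicot.
Open Scope R_scope.
Lemma wron (f f1 g g1 : R -> R) (m : R) :
  (forall x, is_derive f x (f1 x)) -> (forall x, is_derive f1 x (m * f x)) ->
  (forall x, is_derive g x (g1 x)) -> (forall x, is_derive g1 x (m * g x)) ->
  forall a, f1 a * g a - f a * g1 a = f1 (a+1) * g (a+1) - f (a+1) * g1 (a+1).
Proof.
intros Hf Hf1 Hg Hg1 a.
apply (eq_is_derive (fun x => f1 x * g x - f x * g1 x)); [|lra].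
intros t _.
pose proof is_derive_minus _ _ t _ _ (is_derive_mult f1 g t _ _ (Hf1 t) (Hg t) (fun _ _ => Rmult_comm _ _))
   (is_derive_mult f g1 t _ _ (Hf t) (Hg1 t) (fun _ _ => Rmult_comm _ _)).
replace (@zero R_NormedModule) with (minus (plus (mult (m * f t) (g t)) (mult (f1 t) (g1 t)))
          (plus (mult (f1 t) (g1 t)) (mult (f t) (m * g t)))).
exact H.
simpl. unfold minus, plus, opp, mult, zero; simpl. ring.
Qed.
Lemma hom (f f1 : R->R) m : m <> 0 -> -4*PI^2 < m ->
  (forall x, is_derive f x (f1 x)) -> (forall x, is_derive f1 x (m * f x)) ->
  (forall x, f (x+1) = f x) -> (forall x, f1 (x+1) = f1 x) -> forall x0, f x0 = 0.
Proof.
intros Hm0 Hm Hf Hf1 Pf Pf1 x0.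
destruct (Rlt_or_le 0 m) as [Hp|Hn].
- set (a := sqrt m).
  assert (Ha : 0 < a) by (apply sqrt_lt_R0; lra).
  assert (Haa : a * a = m) by (apply sqrt_sqrt; lra). clearbody a.
  pose proof (wron f f1 (fun x => exp (a*(x-x0))) (fun x => a * exp (a*(x-x0))) m Hf Hf1) as W1.
  pose proof (wron f f1 (fun x => exp (-a*(x-x0))) (fun x => -a * exp (-a*(x-x0))) m Hf Hf1) as W2.
  assert (D1 : forall x, is_derive (fun x => exp (a*(x-x0))) x (a * exp (a*(x-x0)))).
  { intro x. auto_derive; auto; unfold Rminus; ring. }
  assert (D2 : forall x, is_derive (fun x => a * exp (a*(x-x0))) x (m * exp (a*(x-x0)))).
  { intro x. auto_derive; auto. rewrite <- Haa; unfold Rminus; ring. }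
  assert (D3 : forall x, is_derive (fun x => exp (-a*(x-x0))) x (-a * exp (-a*(x-x0)))).
  { intro x. auto_derive; auto; unfold Rminus; ring. }
  assert (D4 : forall x, is_derive (fun x => -a * exp (-a*(x-x0))) x (m * exp (-a*(x-x0)))).
  { intro x. auto_derive; auto. rewrite <- Haa; unfold Rminus; ring. }
  specialize (W1 D1 D2 x0). specialize (W2 D3 D4 x0).
  simpl in W1, W2. rewrite Pf, Pf1 in W1, W2.
  replace (x0 + 1 - x0) with 1 in W1, W2 by ring. replace (x0 - x0) with 0 in W1, W2 by ring.
  rewrite !Rmult_0_r, !exp_0, !Rmult_1_r in W1, W2.
  assert (E1 : 1 < exp a) by (rewrite <- exp_0; apply exp_increasing; lra).
  assert (E2 : exp (-a) < 1) by (rewrite <- exp_0; apply exp_increasing; lra).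
  replace (-a * 1) with (-a) in W2 by ring.
  assert (q1 : f1 x0 - f x0 * a = 0).
  { apply (Rmult_eq_reg_r (exp a - 1)); [|lra]. lra. }
  assert (q2 : f1 x0 + f x0 * a = 0).
  { apply (Rmult_eq_reg_r (1 - exp (-a))); [|lra]. lra. }
  nra.
- assert (Hn' : m < 0) by lra.
  set (a := sqrt (-m)).
  assert (Ha : 0 < a) by (apply sqrt_lt_R0; lra).
  assert (Haa : a * a = -m) by (apply sqrt_sqrt; lra). clearbody a.
  assert (Ha2 : a < 2 * PI).
  { pose proof PI_RGT_0. nra. }
  pose proof (wron f f1 (fun x => cos (a*(x-x0))) (fun x => - a * sin (a*(x-x0))) m Hf Hf1) as W1.
  pose proof (wron f f1 (fun x => sin (a*(x-x0))) (fun x => a * cos (a*(x-x0))) m Hf Hf1) as W2.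
  assert (D1 : forall x, is_derive (fun x => cos (a*(x-x0))) x (-a * sin (a*(x-x0)))).
  { intro x. auto_derive; auto; unfold Rminus; ring. }
  assert (D2 : forall x, is_derive (fun x => -a * sin (a*(x-x0))) x (m * cos (a*(x-x0)))).
  { intro x. auto_derive; auto. replace m with (-(a*a)) by lra; unfold Rminus; ring. }
  assert (D3 : forall x, is_derive (fun x => sin (a*(x-x0))) x (a * cos (a*(x-x0)))).
  { intro x. auto_derive; auto; unfold Rminus; ring. }
  assert (D4 : forall x, is_derive (fun x => a * cos (a*(x-x0))) x (m * sin (a*(x-x0)))).
  { intro x. auto_derive; auto. replace m with (-(a*a)) by lra; unfold Rminus; ring. }
  specialize (W1 D1 D2 x0). specialize (W2 D3 D4 x0).
  simpl in W1, W2. rewrite Pf, Pf1 in W1, W2.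
  replace (x0 + 1 - x0) with 1 in W1, W2 by ring. replace (x0 - x0) with 0 in W1, W2 by ring.
  rewrite !Rmult_0_r, !cos_0, !sin_0, !Rmult_1_r in W1, W2.
  assert (Hc : cos a < 1).
  { replace a with (2 * (a/2)) by field. rewrite cos_2a_sin.
    assert (0 < sin (a/2)) by (apply sin_gt_0; lra). nra. }
  pose proof (sin2_cos2 a) as SC. unfold Rsqr in SC.
  set (P := f x0 * a). set (q := f1 x0). set (C := cos a). set (S := sin a).
  replace (a*1) with a in W1 by ring. replace (-a*0) with 0 in W1 by ring.
  assert (E1 : q * (1 - C) = P * S) by (unfold P, q, C, S in *; lra).
  assert (E2 : P * (1 - C) = -(q * S)) by (unfold P, q, C, S in *; lra).
  assert (HS : S * S = 1 - C * C) by (unfold S, C; lra).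
  assert (H0 : P * (2 * (1 - C)) = 0).
  { replace (P*(2*(1-C))) with ((1-C)*(P*(1-C)) + P*(S*S)) by (rewrite HS; ring).
    replace (P*(S*S)) with (S*(P*S)) by ring. rewrite E2, <- E1. ring. }
  assert (HP : P = 0).
  { apply (Rmult_eq_reg_r (2 * (1 - C))); [lra|unfold C; lra]. }
  unfold P in HP. nra.
Qed.

Lemma dper (phi : R -> R) : periodic1 phi -> (forall x, ex_derive phi x) ->
  forall x, Derive phi (x+1) = Derive phi x.
Proof.
intros P Hd x. symmetry. apply is_derive_unique.
pose proof (is_derive_comp phi (fun y => y + 1) x _ 1 (Derive_correct phi (x+1) (Hd (x+1)))) as H.
assert (H1 : is_derive (fun y : R => y + 1) x 1) by (auto_derive; auto; ring).
specialize (H H1).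
unfold scal in H; simpl in H; unfold mult in H; simpl in H; rewrite Rmult_1_l in H.
apply (is_derive_ext (fun y => phi (y + 1))); [exact P | exact H].
Qed.

Lemma RInt_cst (phi : R -> R) k : (forall x, phi x = k) -> RInt phi 0 1 = k.
Proof.
intro H. rewrite (RInt_ext phi (fun _ => k)). rewrite RInt_const. 
unfold scal; simpl; unfold mult; simpl. ring.
intros; auto.
Qed.

Lemma stable (D kappa lam : R) (hD : 0 < D) (hk : 0 < kappa) :
  kappa < 1 + 4 * PI ^ 2 * D -> is_eigenvalue D kappa lam -> lam < 0.
Proof.
intros Hk [phi [[P [Hd [Hdd Hc]]] [[x1 Hx1] E]]].
destruct (Rlt_or_le lam 0) as [|Hl]; auto. exfalso.
set (c := RInt phi 0 1) in *.
set (m := (lam - kappa + 1) / D). set (b := kappa * c / D).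
assert (HmD : m * D = lam - kappa + 1) by (unfold m; field; lra).
assert (HbD : b * D = kappa * c) by (unfold b; field; lra).
assert (E2 : forall x, Derive (Derive phi) x = m * phi x + b).
{ intro x. specialize (E x). unfold Lop in E. change (Derive_n phi 2 x) with (Derive (Derive phi) x) in E.
  fold c in E. apply (Rmult_eq_reg_r D); [|lra]. rewrite Rmult_plus_distr_r.
  replace (m * phi x * D) with ((m * D) * phi x) by ring. rewrite HmD, HbD. lra. }
assert (Hf : forall x, is_derive phi x (Derive phi x)) by (intro; apply Derive_correct; auto).
assert (Hf1 : forall x, is_derive (Derive phi) x (Derive (Derive phi) x)) by (intro; apply Derive_correct; auto).
pose proof (dper phi P Hd) as P1.
destruct (Req_dec m 0) as [Hm0|Hm0].
-
  assert (Hb : b = 0).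
  { assert (H : (fun x => Derive phi x - b * x) 0 = (fun x => Derive phi x - b * x) 1).
    { apply (eq_is_derive (fun x => Derive phi x - b * x)); [|lra]. intros t _.
      assert (Hl1 : is_derive (fun x => b * x) t b) by (auto_derive; auto; ring).
      pose proof (is_derive_minus (Derive phi) (fun x => b * x) t _ _ (Hf1 t) Hl1) as H'.
      replace (@zero R_NormedModule) with (minus (Derive (Derive phi) t) b).
      exact H'.
      rewrite E2, Hm0. unfold minus, plus, opp, zero; simpl. ring. }
    simpl in H. replace 1 with (0+1) in H by ring. rewrite P1 in H. lra. }
  assert (Hq : forall x0, Derive phi x0 = 0).
  { intro x0.
    assert (Hf1' : forall x, is_derive (Derive phi) x (m * phi x)).
    { intro x. replace (m * phi x) with (Derive (Derive phi) x); auto. rewrite E2, Hb; ring. }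
    pose proof (wron phi (Derive phi) (fun x => x - x0) (fun _ => 1) m Hf Hf1') as W.
    assert (G1 : forall x, is_derive (fun x => x - x0) x 1) by (intro; auto_derive; auto; ring).
    assert (G2 : forall x, is_derive (fun _ : R => 1) x (m * (x - x0))) by (intro; rewrite Hm0; auto_derive; auto; ring).
    specialize (W G1 G2 x0). simpl in W. rewrite P, P1 in W. lra. }
  assert (Hconst : forall x, phi x = phi 0).
  { intro x. destruct (Rtotal_order x 0) as [H|[H|H]].
    - apply (eq_is_derive phi); auto. intros t _. pose proof (Hf t) as Ht. rewrite Hq in Ht. exact Ht.
    - subst; auto.
    - symmetry. apply (eq_is_derive phi); auto. intros t _. pose proof (Hf t) as Ht. rewrite Hq in Ht. exact Ht. }
  assert (Hcc : c = phi 0) by (apply RInt_cst; auto).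
  assert (c = 0) by nra.
  apply Hx1. rewrite Hconst. lra.
- assert (Hm : -4 * PI ^ 2 < m) by nra.
  set (psi := fun x => phi x + b / m).
  assert (Hpsi : forall x, psi x = 0).
  { apply (hom psi (Derive phi) m Hm0 Hm).
    - intro x. pose proof (is_derive_plus phi (fun _ => b / m) x _ _ (Hf x) (is_derive_const (b/m) x)) as H.
      rewrite plus_zero_r in H. exact H.
    - intro x. replace (m * psi x) with (Derive (Derive phi) x); auto. rewrite E2. unfold psi. field; auto.
    - intro x. unfold psi. rewrite P. auto.
    - exact P1. }
  assert (Hconst : forall x, phi x = - (b / m)).
  { intro x. specialize (Hpsi x). unfold psi in Hpsi. lra. }
  assert (Hcc : c = - (b / m)) by (apply RInt_cst; auto).
  assert (Hcm : c * m = - b) by (rewrite Hcc; field; auto).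
  assert (c * (lam + 1) = 0).
  { assert (c * m * D = - b * D) by (rewrite Hcm; ring).
    replace (c * m * D) with (c * (m * D)) in H by ring. rewrite HmD in H.
    replace (- b * D) with (- (b * D)) in H by ring. rewrite HbD in H. nra. }
  assert (Hc0 : c = 0) by nra.
  assert (Hb0 : b = 0).
  { apply (Rmult_eq_reg_r D); [|lra]. rewrite HbD, Hc0. ring. }
  apply Hx1. rewrite Hconst. rewrite Hb0. unfold Rdiv. ring.
Qed.

Lemma unstable (D kappa : R) (hD : 0 < D) (hk : 0 < kappa) :
  kappa > 1 + 4 * PI ^ 2 * D -> linearly_unstable D kappa.
Proof.
intro Hk. pose proof PI_RGT_0 as HPI.
set (phi := fun x => cos (2 * PI * x)).
assert (dphi : forall x, Derive phi x = -(2*PI) * sin (2*PI*x)).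
{ intro x. apply is_derive_unique. unfold phi. auto_derive; auto; ring. }
assert (ddphi : forall x, Derive (Derive phi) x = -(2*PI)*(2*PI) * cos (2*PI*x)).
{ intro x. rewrite (Derive_ext _ _ x dphi). apply is_derive_unique. auto_derive; auto; ring. }
assert (Hint : RInt phi 0 1 = 0).
{ assert (H1 : forall x, Rmin 0 1 <= x <= Rmax 0 1 -> is_derive (fun x => sin (2*PI*x) / (2*PI)) x (phi x)).
  { intros x _. unfold phi. auto_derive; auto. field. lra. }
  assert (H2 : forall x, Rmin 0 1 <= x <= Rmax 0 1 -> continuous phi x).
  { intros x _. apply (ex_derive_continuous (K:=R_AbsRing) (V:=R_NormedModule)). unfold phi. auto_derive; auto. }
  pose proof (is_RInt_derive _ phi 0 1 H1 H2) as H. apply is_RInt_unique in H. rewrite H.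
  simpl. rewrite Rmult_1_r, Rmult_0_r, sin_2PI, sin_0. unfold minus, plus, opp; simpl. field. lra. }
exists (kappa - 1 - 4 * PI ^ 2 * D). split; [|lra].
exists phi. split; [|split].
- split; [|split; [|split]].
  + intro x. unfold phi. replace (2 * PI * (x + 1)) with (2 * PI * x + 2 * PI) by ring.
    rewrite cos_plus, cos_2PI, sin_2PI. ring.
  + intro x. unfold phi. auto_derive; auto.
  + intro x. apply (ex_derive_ext (fun t => -(2*PI) * sin (2*PI*t))).
    intro; rewrite dphi; auto. auto_derive; auto.
  + intro x. apply (continuous_ext (fun t => -(2*PI)*(2*PI) * cos (2*PI*t))).
    intro t. change (Derive_n phi 2 t) with (Derive (Derive phi) t). rewrite ddphi. auto.
    apply (ex_derive_continuous (K:=R_AbsRing) (V:=R_NormedModule)). auto_derive; auto.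
- exists 0. unfold phi. rewrite Rmult_0_r, cos_0. lra.
- intro x. unfold Lop. change (Derive_n phi 2 x) with (Derive (Derive phi) x).
  rewrite ddphi, Hint. unfold phi. ring.
Qed.

Theorem mainTheorem6 (D kappa : R) (hD : 0 < D) (hk : 0 < kappa) :
  (kappa < 1 + 4 * PI ^ 2 * D -> linearly_stable D kappa) /\
  (kappa > 1 + 4 * PI ^ 2 * D -> linearly_unstable D kappa).
Proof.
split.
- intros H lam He. exact (stable D kappa lam hD hk H He).
- apply unstable; auto.
Qed.
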